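(* Let $\mathcal H$ be a hypergraph and, for $n\ge 0$, let $\mathcal H^n$ be its $n$-skeleton (with $\mathcal H^{-1}=\emptyset$). Then for all $i,n\ge 0$, $$H_i(\mathcal H^n,\mathcal H^{n-1})=\begin{cases}0,& i\ne n,\\ \mathrm{Inf}_n(\mathcal H),& i=n,\end{cases}$$ where $H_i(\cdot,\cdot)$ is relative embedded homology.
   Context: A hypergraph is a finite set $\mathcal H$ of nonempty finite subsets of a vertex set; elements are hyperedges, and a hyperedge with $n+1$ vertices has dimension $n$. The $n$-skeleton $\mathcal H^n$ is the sub-hypergraph of all hyperedges of dimension at most $n$. The associated simplicial complex is $\Delta\mathcal H=\{\sigma\ne\emptyset:\sigma\subseteq\tau\text{ for some }\tau\in\mathcal H\}$. Fix an abelian coefficient group $G$; $C_*(\Delta\mathcal H)$ is the simplicial chain complex with coefficients in $G$ and boundary $\partial$, $G(\mathcal H)_n$ the $G$-linear combinations of $n$-hyperedges of $\mathcal H$, and $\mathrm{Inf}_n(\mathcal H)=G(\mathcal H)_n\cap\partial_n^{-1}(G(\mathcal H)_{n-1})$. For $\mathcal A\subseteq\mathcal H$, the relative embedded homology is $H_n(\mathcal H,\mathcal A)=H_n(\mathrm{Inf}_*(\mathcal H)/\mathrm{Inf}_*(\mathcal A))$. *)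

(* Defs.v *)
From mathcomp Require Import all_boot all_order all_algebra.
Set Implicit Arguments. Unset Strict Implicit. Unset Printing Implicit Defensive.
Import Order.TTheory GRing.Theory Num.Theory.
Local Open Scope ring_scope.

Section Hypergraphs.
Variables (V : finType) (G : zmodType).

Definition hypergraph (H : {set {set V}}) : Prop := set0 \notin H.

(* n-skeleton H^n : hyperedges of dimension <= n, i.e. with <= n+1 vertices.
   Indexed by an integer so that H^{-1} = skel H (-1) is empty. *)
Definition skel (H : {set {set V}}) (n : int) : {set {set V}} :=
  [set s in H | (Posz #|s| <= n + 1)%R].

(* Simplicial chains with coefficients in G: a chain assigns a coefficient to
   each simplex (nonempty subset of V); an n-chain is supported on sets with
   n+1 vertices. Simplices are oriented by the fixed order enum_rank on V. *)
Definition chain := {ffun {set V} -> G}.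

(* Simplicial boundary: (bd c)(t) = sum over v notin t of (-1)^(position of v
   in t U {v}) * c(t U {v}); no augmentation (bd of a 0-chain is 0). *)
Definition bd (c : chain) : chain :=
  [ffun t : {set V} => if t == set0 then 0 else
     \sum_(v | v \notin t)
        (if odd #|[set u in t | (enum_rank u < enum_rank v)%N]|
         then - c (v |: t) else c (v |: t))].

Definition GH (H : {set {set V}}) (n : nat) (c : chain) : Prop :=
  forall s, c s != 0 -> (s \in H) && (#|s| == n.+1)%N.

Definition GHprev (H : {set {set V}}) (n : nat) (c : chain) : Prop :=
  if n is n'.+1 then GH H n' c else c = 0.

Definition Inf (H : {set {set V}}) (n : nat) (c : chain) : Prop :=
  GH H n c /\ GHprev H n (bd c).

Definition Infprev (H : {set {set V}}) (n : nat) (c : chain) : Prop :=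
  if n is n'.+1 then Inf H n' c else c = 0.

(* Cycles of the quotient complex Inf_*(H)/Inf_*(A) in degree n, as
   representatives: c in Inf_n(H) with bd c in Inf_{n-1}(A). *)
Definition relcycle (H A : {set {set V}}) (n : nat) (c : chain) : Prop :=
  Inf H n c /\ Infprev A n (bd c).

(* Boundaries of the quotient complex in degree n, as representatives:
   c = bd b + a with b in Inf_{n+1}(H), a in Inf_n(A). *)
Definition relboundary (H A : {set {set V}}) (n : nat) (c : chain) : Prop :=
  exists b, Inf H n.+1 b /\ Inf A n (c - bd b).

Definition relhom_trivial (H A : {set {set V}}) (n : nat) : Prop :=
  forall c, relcycle H A n c -> relboundary H A n c.

(* H_n(H, A) = Z_n / B_n is isomorphic to the subgroup M of chains:
   (first isomorphism theorem) there is a group homomorphism from the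
   relative cycles onto M whose kernel is exactly the relative boundaries. *)
Definition relhom_iso (H A : {set {set V}}) (n : nat) (M : chain -> Prop)
  : Prop :=
  exists f : chain -> chain,
    [/\ forall x y, relcycle H A n x -> relcycle H A n y ->
          f (x - y) = f x - f y,
        forall z, relcycle H A n z -> M (f z),
        forall m, M m -> exists2 z, relcycle H A n z & f z = m
      & forall z, relcycle H A n z -> (f z = 0 <-> relboundary H A n z)].

End Hypergraphs.

(* Main.v *)
Require Import Defs.
From mathcomp Require Import all_boot all_order all_algebra.
Import GRing.Theory Num.Theory.
Local Open Scope ring_scope.

Section D2.
Variables (V : finType) (G : zmodType).

Definition sg (b : bool) (x : G) := if b then - x else x.
Lemma sg_sum b (I : finType) (P : pred I) (F : I -> G) :
  sg b (\sum_(i | P i) F i) = \sum_(i | P i) sg b (F i).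
Proof. by case: b => //=; rewrite sumrN. Qed.
Lemma sgK b b' x : sg b (sg b' x) = sg (b (+) b') x.
Proof. by case: b; case: b' => //=; rewrite opprK. Qed.

Definition ordv (u v : V) := (enum_rank u < enum_rank v)%N.
Definition sig (t : {set V}) (v : V) := odd #|[set u in t | ordv u v]|.

Lemma bdE (c : chain V G) t : t != set0 ->
  bd c t = \sum_(v | v \notin t) sg (sig t v) (c (v |: t)).
Proof. by move=> ht; rewrite ffunE (negbTE ht). Qed.

Lemma sig_U1 (t : {set V}) (v w : V) : v \notin t -> sig (v |: t) w = sig t w (+) ordv v w.
Proof.
move=> hv; rewrite /sig.
have -> : [set u in v |: t | ordv u w] =
  if ordv v w then v |: [set u in t | ordv u w] else [set u in t | ordv u w].
  apply/setP=> u; case hvw: (ordv v w); rewrite !inE;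
    case: (eqVneq u v) => [->|] //=; by rewrite ?hvw ?(negbTE hv).
case: (ordv v w); last by rewrite addbF.
by rewrite cardsU1 inE (negbTE hv) /= addbT.
Qed.

Lemma bd2 (c : chain V G) : bd (bd c) = 0.
Proof.
apply/ffunP=> t; rewrite [RHS]ffunE.
case: (eqVneq t set0) => [->|ht]; first by rewrite ffunE eqxx.
rewrite bdE //.
pose K v w := sg (sig t v (+) sig t w) (c (v |: (w |: t))).
have KC v w : K v w = K w v by rewrite /K addbC setUCA.
transitivity (\sum_(v | v \notin t) \sum_(w | (w \notin t) && (w != v))
    sg (ordv v w) (K v w)).
  apply: eq_bigr => v hv.
  have hvt : v |: t != set0 by apply/set0Pn; exists v; rewrite setU11.
  rewrite bdE // sg_sum.
  apply: eq_big => [w|w]; first by rewrite !inE negb_or andbC.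
  rewrite !inE negb_or => /andP[hwv _].
  rewrite sig_U1 // sgK /K sgK setUCA; congr sg.
  by case: (sig t v); case: (sig t w); case: (ordv v w).
have ordT v w : w != v -> ~~ ordv v w = ordv w v.
  move=> hwv; rewrite /ordv; case: (ltngtP (enum_rank v) (enum_rank w)) => //.
  by move/ord_inj/enum_rank_inj => e; rewrite e eqxx in hwv.
transitivity (\sum_(v | v \notin t) \sum_(w | (w \notin t) && ordv v w) - K v w
   + \sum_(v | v \notin t) \sum_(w | (w \notin t) && ordv w v) K v w).
  rewrite -big_split /=. apply: eq_bigr => v hv.
  rewrite (bigID (fun w => ordv v w)) /=; congr (_ + _).
    apply: eq_big => w; last by move=> /andP[_ ->].
    case: (eqVneq w v) => [->|hwv]; last by rewrite andbT.
    by rewrite /ordv ltnn !andbF.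
  apply: eq_big => w; last by move=> /andP[/andP[_ hwv] h]; rewrite (negbTE h).
  case: (eqVneq w v) => [->|hwv]; first by rewrite /ordv ltnn !andbF.
  by rewrite andbT ordT.
rewrite [X in _ + X](exchange_big_dep (fun w => w \notin t)) /=; last by move=> ? ? _ /andP[].
rewrite -big_split /= big1 // => v hv.
rewrite [X in _ + X](eq_bigl (fun w => (w \notin t) && ordv v w)); last first.
  by move=> w; rewrite hv.
rewrite -big_split /= big1 // => w _.
by rewrite KC addNr.
Qed.

Lemma bd0 : bd (0 : chain V G) = 0.
Proof.
apply/ffunP=> t; rewrite !ffunE; case: ifP => // _.
by rewrite big1 // => v _; rewrite ffunE; case: ifP; rewrite ?oppr0.
Qed.

Lemma Inf0 (H : {set {set V}}) n : Inf H n (0 : chain V G).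
Proof.
split; first by move=> s; rewrite ffunE eqxx.
rewrite bd0; case: n => // n s; by rewrite ffunE eqxx.
Qed.

Lemma chain0 (c : chain V G) : (forall s, c s != 0 -> False) -> c = 0.
Proof.
move=> h; apply/ffunP=> s; rewrite ffunE; apply/eqP; apply/negPn/negP => /h //.
Qed.

Lemma mem_skelN (H : {set {set V}}) s (n : nat) :
  (s \in skel H n%:Z) = (s \in H) && (#|s| <= n.+1)%N.
Proof. by rewrite inE -PoszD lez_nat addn1. Qed.

Lemma mem_skelP (H : {set {set V}}) s (n : nat) :
  (s \in skel H (n%:Z - 1)) = (s \in H) && (#|s| <= n)%N.
Proof. by rewrite inE subrK lez_nat. Qed.

Lemma GH_mono (H A : {set {set V}}) n (c : chain V G) :
  (forall s, s \in H -> #|s| = n.+1 -> s \in A) -> GH H n c -> GH A n c.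
Proof.
move=> hA h s /h /andP[hs /eqP e]; by rewrite (hA _ hs e) e eqxx.
Qed.
End D2.

Theorem mainTheorem4 (V : finType) (G : zmodType) (H : {set {set V}}) :
  hypergraph H ->
  forall i n : nat,
    (i <> n ->
       @relhom_trivial V G (skel H n%:Z) (skel H (n%:Z - 1)) i) /\
    (i = n ->
       @relhom_iso V G (skel H n%:Z) (skel H (n%:Z - 1)) n (@Inf V G H n)).
Proof.
move=> _ i n; split.
  move=> hin c [[GHc GHbd] _]; exists 0; split; first exact: Inf0.
  rewrite bd0 subr0.
  case: (ltnP n i) => hni.
    have -> : c = 0.
      apply: chain0 => s /GHc; rewrite mem_skelN => /andP[/andP[_ h] /eqP e].
      by move: h; rewrite e ltnS leqNgt hni.
    exact: Inf0.
  have hlt : (i < n)%N by rewrite ltn_neqAle hni andbT; apply/eqP.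
  split.
    apply: GH_mono GHc => s; rewrite mem_skelN mem_skelP => /andP[-> _] ->.
    by [].
  move: GHbd; rewrite /GHprev; case: i {hin hni GHc} hlt => [|i'] hlt //.
  apply: GH_mono => s; rewrite mem_skelN mem_skelP => /andP[-> _] ->.
  by rewrite ltnW.
move=> _; exists id; split => //.
- move=> z [[GHz GHbd] _]; split.
    by apply: GH_mono GHz => s; rewrite mem_skelN => /andP[].
  move: GHbd; case: (n) => [|n'] //=.
  by apply: GH_mono => s; rewrite mem_skelN => /andP[].
- move=> m [GHm GHbd]; exists m => //; split; first split.
  + by apply: GH_mono GHm => s hs e; rewrite mem_skelN hs e leqnn.
  + move: GHbd; case: (n) => [|n'] //=.
    by apply: GH_mono => s hs e; rewrite mem_skelN hs e ltnW.
  + move: GHbd; case: (n) GHm => [|n'] GHm /=.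
      move=> _; apply: chain0 => s.
      case: (eqVneq s set0) => [->|hs]; first by rewrite ffunE eqxx /= eqxx.
      rewrite bdE // big1 ?eqxx // => v hv.
      case: (eqVneq (m (v |: s)) 0) => [->|/GHm/andP[_]]; first by rewrite /sg; case: ifP; rewrite ?oppr0.
      rewrite cardsU1 hv add1n eqSS => /eqP/cards0_eq e.
      by rewrite e eqxx in hs.
    move=> GHbd; split.
      by apply: GH_mono GHbd => s hs e; rewrite mem_skelP hs e leqnn.
    rewrite bd2; case: (n') => [|k] //= s; by rewrite ffunE eqxx.
- move=> z [[GHz _] _]; split.
    move=> ->; exists 0; split; first exact: Inf0.
    by rewrite bd0 subr0; exact: Inf0.
  move=> [b [[GHb _] [GHzb _]]].
  have b0 : b = 0.
    apply: chain0 => s /GHb; rewrite mem_skelN => /andP[/andP[_ h] /eqP e].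
    by move: h; rewrite e ltnn.
  move: GHzb; rewrite b0 bd0 subr0 => GHz'.
  apply: chain0 => s /GHz'; rewrite mem_skelP => /andP[/andP[_ h] /eqP e].
  by move: h; rewrite e ltnn.
Qed.
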